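(* Consider the two-slab, three-element (periodic) space-time SBP scheme: unknowns $\boldsymbol\rho^{I},\boldsymbol g^{I}_k,\boldsymbol\rho^{II},\boldsymbol g^{II}_k$ ($k=1,\dots,n_v$) satisfying, for slab I, $$\mathsf D_t\boldsymbol\rho^{I}+\tilde{\mathsf D}_x\langle v\boldsymbol g^{I}\rangle=-\sigma_a\boldsymbol\rho^{I}-\mathsf H_t^{-1}\mathsf t_B\mathsf t_B^\top(\boldsymbol\rho^{I}-\boldsymbol\rho^{I}(0)),$$ $$\mathsf D_t\boldsymbol g^{I}_k+\tfrac{v_k}{\varepsilon}\tilde{\mathsf D}_x\boldsymbol g^{I}_k-\tfrac1\varepsilon\langle v\tilde{\mathsf D}_x\boldsymbol g^{I}\rangle+\tfrac{v_k}{\varepsilon^2}\tilde{\mathsf D}_x\boldsymbol\rho^{I}=-\Big(\tfrac{\sigma_s}{\varepsilon^2}+\sigma_a\Big)\boldsymbol g^{I}_k-\mathsf H_t^{-1}\mathsf t_B\mathsf t_B^\top(\boldsymbol g^{I}_k-\boldsymbol g^{I}_k(0)),$$ and for slab II the same equations with superscript $II$ and with the initial SAT terms replaced by $-\mathsf H_t^{-1}\mathsf t_B(\mathsf t_B^\top\boldsymbol\rho^{II}-\mathsf t_T^\top\boldsymbol\rho^{I})$ and $-\mathsf H_t^{-1}\mathsf t_B(\mathsf t_B^\top\boldsymbol g^{II}_k-\mathsf t_T^\top\boldsymbol g^{I}_k)$; the initial data satisfy $\langle\boldsymbol g^{I}(0)\rangle=0$. Then the scheme is stable: with $M_T=\bar{\boldsymbol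 t}_T\bar{\boldsymbol t}_T^\top\otimes\mathsf I_3\otimes\bar{\mathsf H}_x$ and $M_B=\bar{\boldsymbol t}_B\bar{\boldsymbol t}_B^\top\otimes\mathsf I_3\otimes\bar{\mathsf H}_x$, every solution satisfies $$\tfrac12(\boldsymbol\rho^{II})^\top M_T\boldsymbol\rho^{II}+\tfrac{\varepsilon^2}2\langle(\boldsymbol g^{II})^\top M_T\boldsymbol g^{II}\rangle\le\tfrac12\boldsymbol\rho^{I}(0)^\top M_B\boldsymbol\rho^{I}(0)+\tfrac{\varepsilon^2}2\langle\boldsymbol g^{I}(0)^\top M_B\boldsymbol g^{I}(0)\rangle.$$
   Context: SBP operators: $\bar{\mathsf D}=\bar{\mathsf H}^{-1}\bar{\mathsf Q}$ on nodes $x_0<\dots<x_n$ is a degree-$p$ SBP approximation of $d/dx$ if $\bar{\mathsf D}\boldsymbol x^k=k\boldsymbol x^{k-1}$ for $0\le k\le p$, $\bar{\mathsf H}$ is diagonal symmetric positive definite, and $\bar{\mathsf Q}+\bar{\mathsf Q}^\top=\bar{\mathsf E}=\bar{\boldsymbol t}_R\bar{\boldsymbol t}_R^\top-\bar{\boldsymbol t}_L\bar{\boldsymbol t}_L^\top=\mathrm{diag}(-1,0,\dots,0,1)$, $\bar{\boldsymbol t}_L,\bar{\boldsymbol t}_R$ first/last unit vectors. $\bar{\mathsf D}_x=\bar{\mathsf H}_x^{-1}\bar{\mathsf Q}_x$ on $n_x+1$ spatial nodes per element, $\bar{\mathsf S}_x=\bar{\mathsf Q}_x-\frac12\bar{\mathsf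 E}_x$; $\bar{\mathsf D}_t=\bar{\mathsf H}_t^{-1}\bar{\mathsf Q}_t$ on $n_t+1$ temporal nodes per slab, with first/last unit vectors $\bar{\boldsymbol t}_B,\bar{\boldsymbol t}_T$. $\tilde{\bar{\mathsf D}}^G_x=(\mathsf I_3\otimes\bar{\mathsf H}_x^{-1})\tilde{\bar{\mathsf Q}}^G_x$, with $\tilde{\bar{\mathsf Q}}^G_x$ the $3\times3$ block matrix with diagonal blocks $\bar{\mathsf S}_x$, blocks $(1,2),(2,3),(3,1)$ equal to $\frac12\bar{\boldsymbol t}_R\bar{\boldsymbol t}_L^\top$, blocks $(2,1),(3,2),(1,3)$ equal to $-\frac12\bar{\boldsymbol t}_L\bar{\boldsymbol t}_R^\top$. With identities $\mathsf I_{n_x},\mathsf I_{n_t}$ of sizes $n_x+1,n_t+1$: $\tilde{\mathsf D}_x=\mathsf I_{n_t}\otimes\tilde{\bar{\mathsf D}}^G_x$, $\mathsf D_t=\bar{\mathsf D}_t\otimes\mathsf I_3\otimes\mathsf I_{n_x}$, $\mathsf H_t=\bar{\mathsf H}_t\otimes\mathsf I_3\otimes\mathsf I_{n_x}$, $\mathsf t_B=\bar{\boldsymbol t}_B\otimes\mathsf I_3\otimes\mathsf I_{n_x}$, $\mathsf t_T=\bar{\boldsymbol t}_T\otimes\mathsf I_3\otimes\mathsf I_{n_x}$. Velocity nodes $v_k$, weights $\omega_k$ with $\sum\omega_k=1$, $\sum\omega_kv_k=0$; $\langle\boldsymbol a\rangle=\sum_k\omega_k\boldsymbol a_k$. $\varepsilon>0$,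 $\sigma_s>0$, $\sigma_a\ge0$; $\boldsymbol\rho^{I}(0),\boldsymbol g^{I}_k(0)$ given initial-data vectors. *)

(* Defs.v *)
(* Kronecker product: tensmx from mathcomp-real-closed mxtens
   (standard row-major Kronecker product: (A ⊗ B)[i*p+j, k*q+l] = A[i,k] B[j,l]). *)
From HB Require Import structures.
From mathcomp Require Import all_boot all_order all_algebra.
From mathcomp Require Import mxtens.
Set Implicit Arguments. Unset Strict Implicit. Unset Printing Implicit Defensive.
Import Order.TTheory GRing.Theory Num.Theory.
Local Open Scope ring_scope.

Section SBPDefs.
Variable R : realFieldType.

Definition tL {n : nat} : 'cV[R]_n.+1 := delta_mx ord0 0.
Definition tR {n : nat} : 'cV[R]_n.+1 := delta_mx ord_max 0.

Definition Ebar {n : nat} : 'M[R]_n.+1 := tR *m tR^T - tL *m tL^T.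

Definition xpow {n : nat} (x : 'cV[R]_n) (k : nat) : 'cV[R]_n :=
  map_mx (fun a => a ^+ k) x.

Definition is_SBP {n : nat} (p : nat) (x : 'cV[R]_n.+1) (H Q : 'M[R]_n.+1) : Prop :=
  (forall i j : 'I_n.+1, (i < j)%N -> x i 0 < x j 0) /\
  is_diag_mx H /\ H^T = H /\ (forall i, 0 < H i i) /\
  Q + Q^T = Ebar /\
  (forall k, (k <= p)%N -> (invmx H *m Q) *m xpow x k = k%:R *: xpow x k.-1).

Definition Pcyc : 'M[R]_3 :=
  \matrix_(a < 3, b < 3) (if (b == (a.+1 %% 3)%N :> nat) then 1 else 0).

(* Q~^G_x : diagonal blocks S_x, blocks (1,2),(2,3),(3,1) = 1/2 t_R t_L^T,
   blocks (2,1),(3,2),(1,3) = -1/2 t_L t_R^T (1-indexed) *)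
Definition QGx {nx : nat} (Qx : 'M[R]_nx.+1) : 'M[R]_(3 * nx.+1) :=
  tensmx (1%:M : 'M[R]_3) (Qx - 2^-1 *: Ebar)
  + tensmx Pcyc (2^-1 *: (tR *m tL^T))
  - tensmx Pcyc^T (2^-1 *: (tL *m tR^T)).

Definition DGx {nx : nat} (Hx Qx : 'M[R]_nx.+1) : 'M[R]_(3 * nx.+1) :=
  tensmx (1%:M : 'M[R]_3) (invmx Hx) *m QGx Qx.

Definition Dx_glob {nt nx : nat} (Hx Qx : 'M[R]_nx.+1) : 'M[R]_(nt.+1 * (3 * nx.+1)) :=
  tensmx (1%:M : 'M[R]_nt.+1) (DGx Hx Qx).
Definition Dt_glob {nt nx : nat} (Ht Qt : 'M[R]_nt.+1) : 'M[R]_(nt.+1 * (3 * nx.+1)) :=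
  tensmx (invmx Ht *m Qt) (1%:M : 'M[R]_(3 * nx.+1)).
Definition Ht_glob {nt nx : nat} (Ht : 'M[R]_nt.+1) : 'M[R]_(nt.+1 * (3 * nx.+1)) :=
  tensmx Ht (1%:M : 'M[R]_(3 * nx.+1)).
Definition tB_glob {nt nx : nat} : 'M[R]_(nt.+1 * (3 * nx.+1), 1 * (3 * nx.+1)) :=
  tensmx (tL : 'cV[R]_nt.+1) (1%:M : 'M[R]_(3 * nx.+1)).
Definition tT_glob {nt nx : nat} : 'M[R]_(nt.+1 * (3 * nx.+1), 1 * (3 * nx.+1)) :=
  tensmx (tR : 'cV[R]_nt.+1) (1%:M : 'M[R]_(3 * nx.+1)).
Definition MT {nt nx : nat} (Hx : 'M[R]_nx.+1) : 'M[R]_(nt.+1 * (3 * nx.+1)) :=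
  tensmx ((tR : 'cV[R]_nt.+1) *m tR^T) (tensmx (1%:M : 'M[R]_3) Hx).
Definition MB {nt nx : nat} (Hx : 'M[R]_nx.+1) : 'M[R]_(nt.+1 * (3 * nx.+1)) :=
  tensmx ((tL : 'cV[R]_nt.+1) *m tL^T) (tensmx (1%:M : 'M[R]_3) Hx).

Definition qform {N : nat} (M : 'M[R]_N) (a : 'cV[R]_N) : R := (a^T *m M *m a) 0 0.

Definition vavg {nv N : nat} (w : 'I_nv -> R) (a : 'I_nv -> 'cV[R]_N) : 'cV[R]_N :=
  \sum_(k < nv) w k *: a k.
Definition savg {nv : nat} (w : 'I_nv -> R) (a : 'I_nv -> R) : R :=
  \sum_(k < nv) w k * a k.

End SBPDefs.

(* Main.v *)
Require Import Defs.
From HB Require Import structures.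
From mathcomp Require Import all_boot all_order all_algebra.
From mathcomp Require Import mxtens.
From mathcomp Require Import ring lra.
Import Order.TTheory GRing.Theory Num.Theory.
Local Open Scope ring_scope.

Section Dot.
Variable R : realFieldType.

Definition dot {N : nat} (x y : 'cV[R]_N) : R := (x^T *m y) 0 0.

Lemma dotDr N (x y z : 'cV[R]_N) : dot x (y + z) = dot x y + dot x z.
Proof. by rewrite /dot mulmxDr mxE. Qed.
Lemma dotNr N (x y : 'cV[R]_N) : dot x (- y) = - dot x y.
Proof. by rewrite /dot mulmxN mxE. Qed.
Lemma dotBr N (x y z : 'cV[R]_N) : dot x (y - z) = dot x y - dot x z.
Proof. by rewrite dotDr dotNr. Qed.
Lemma dotZr N a (x y : 'cV[R]_N) : dot x (a *: y) = a * dot x y.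
Proof. by rewrite /dot -scalemxAr mxE. Qed.
Lemma dotC N (x y : 'cV[R]_N) : dot x y = dot y x.
Proof.
by rewrite /dot -(trmxK (x^T *m y)) trmx_mul trmxK mxE.
Qed.
Lemma dotMr N (x y : 'cV[R]_N) (A : 'M_N) : dot x (A *m y) = dot (A^T *m x) y.
Proof. by rewrite /dot trmx_mul trmxK mulmxA. Qed.
Lemma dotMr' N K (x : 'cV[R]_N) (y : 'cV[R]_K) (A : 'M_(N,K)) : dot x (A *m y) = dot (A^T *m x) y.
Proof. by rewrite /dot trmx_mul trmxK mulmxA. Qed.
Lemma dot_sumr N n (x : 'cV[R]_N) (f : 'I_n -> 'cV[R]_N) :
  dot x (\sum_k f k) = \sum_k dot x (f k).
Proof. by rewrite /dot mulmx_sumr summxE. Qed.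

Lemma dot_vavg_r N K nv (w : 'I_nv -> R) (y : 'cV[R]_N) (B : 'M_(N,K)) f :
  dot y (B *m vavg w f) = \sum_k w k * dot y (B *m f k).
Proof.
rewrite /vavg mulmx_sumr dot_sumr; apply: eq_bigr => k _.
by rewrite -scalemxAr dotZr.
Qed.
Lemma dot_vavg_l N nv (w : 'I_nv -> R) (z : 'cV[R]_N) f :
  dot (vavg w f) z = \sum_k w k * dot (f k) z.
Proof.
rewrite dotC -[vavg w f]mul1mx dot_vavg_r; apply: eq_bigr => k _.
by rewrite mul1mx dotC.
Qed.

Lemma dot_skew N (S : 'M[R]_N) x : S^T = - S -> dot x (S *m x) = 0.
Proof.
move=> hS; have : dot x (S *m x) = - dot x (S *m x).
  by rewrite {1}dotMr hS mulNmx dotC -dotNr.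
lra.
Qed.
Lemma dot_skew2 N (S : 'M[R]_N) x y : S^T = - S -> dot x (S *m y) = - dot y (S *m x).
Proof. by move=> hS; rewrite dotMr hS mulNmx dotC dotNr. Qed.

Definition posdiag {N} (D : 'M[R]_N) :=
  (forall i j, i != j -> D i j = 0) /\ (forall i, 0 < D i i).

Lemma dot_diag N (D : 'M[R]_N) x : (forall i j, i != j -> D i j = 0) ->
  dot x (D *m x) = \sum_i D i i * (x i 0 ^+ 2).
Proof.
move=> hD; rewrite /dot mxE; apply: eq_bigr => i _.
rewrite !mxE (bigD1 i) //= big1 ?addr0 => [|j /negbTE hj]; last first.
  by rewrite hD ?mul0r // eq_sym hj.
by rewrite expr2 mulrCA mulrA.
Qed.

Lemma posdiag_ge0 N (D : 'M[R]_N) x : posdiag D -> 0 <= dot x (D *m x).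
Proof.
case=> h1 h2; rewrite dot_diag //; apply: sumr_ge0 => i _.
by apply: mulr_ge0; [apply: ltW | apply: sqr_ge0].
Qed.

Lemma posdiag_def N (D : 'M[R]_N) x : posdiag D -> dot x (D *m x) = 0 -> x = 0.
Proof.
case=> h1 h2; rewrite dot_diag // => /eqP; rewrite psumr_eq0 => [/allP H|i _]; last first.
  by apply: mulr_ge0; [apply: ltW | apply: sqr_ge0].
apply/matrixP => i j; rewrite [j]ord1 mxE.
have /H : i \in index_enum 'I_N by rewrite mem_index_enum.
rewrite /= mulf_eq0 (gt_eqF (h2 i)) /= sqrf_eq0 => /eqP //.
Qed.

Lemma posdiag_tr N (D : 'M[R]_N) : posdiag D -> D^T = D.
Proof.
case=> h1 _; apply/matrixP => i j; rewrite mxE.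
case: (eqVneq i j) => [->//|h]. by rewrite (h1 _ _ h) h1 // eq_sym h.
Qed.

Lemma posdiag_unit N (D : 'M[R]_N) : posdiag D -> D \in unitmx.
Proof.
case=> h1 h2; rewrite unitmxE det_trig.
  rewrite unitfE; apply/prodf_neq0 => i _; exact: lt0r_neq0.
apply/is_trig_mxP => i j hij; apply: h1; apply/eqP => e; move: hij; by rewrite e ltnn.
Qed.

Lemma dotZl N a (x y : 'cV[R]_N) : dot (a *: x) y = a * dot x y.
Proof. by rewrite dotC dotZr dotC. Qed.
Lemma dot0l N (y : 'cV[R]_N) : dot 0 y = 0.
Proof. by rewrite /dot trmx0 mul0mx mxE. Qed.
Lemma dotBl N (x y z : 'cV[R]_N) : dot (x - y) z = dot x z - dot y z.
Proof. by rewrite dotC dotBr dotC [dot z y]dotC. Qed.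
Lemma qformE N (M : 'M[R]_N) a : qform M a = dot a (M *m a).
Proof. by rewrite /qform /dot mulmxA. Qed.
Lemma quadE N K (T : 'M[R]_(N, K)) (K1 : 'M[R]_K) (u : 'cV[R]_N) :
  dot u (T *m K1 *m T^T *m u) = dot (T^T *m u) (K1 *m (T^T *m u)).
Proof. by rewrite -!mulmxA dotMr'. Qed.
Lemma vavg_mul N K nv (w : 'I_nv -> R) (B : 'M[R]_(K, N)) f :
  vavg w (fun k => B *m f k) = B *m vavg w f.
Proof. by rewrite /vavg mulmx_sumr; apply: eq_bigr => k _; rewrite scalemxAr. Qed.
Lemma eq_savg nv (w : 'I_nv -> R) f g : (forall k, f k = g k) -> savg w f = savg w g.
Proof. by move=> h; apply: eq_bigr => k _; rewrite h. Qed.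
End Dot.
Arguments dot {R N}.
Arguments posdiag {R N}.


Lemma slab (R : realFieldType) (N M nv : nat) (P A S Dt Dx Hi : 'M[R]_N)
  (tB tT : 'M[R]_(N, M)) (K1 : 'M[R]_M) (v w : 'I_nv -> R) (eps sigs siga : R)
  (rho : 'cV[R]_N) (brho : 'cV[R]_M) (g : 'I_nv -> 'cV[R]_N) (bg : 'I_nv -> 'cV[R]_M) :
  P *m Dt = A -> A + A^T = tT *m K1 *m tT^T - tB *m K1 *m tB^T ->
  P *m Dx = S -> S^T = - S -> P *m Hi *m tB = tB *m K1 ->
  K1^T = K1 -> (forall u, 0 <= dot u (K1 *m u)) ->
  (forall x, 0 <= dot x (P *m x)) -> (forall x, dot x (P *m x) = 0 -> x = 0) ->
  (forall k, 0 < w k) -> \sum_(k < nv) w k = 1 -> \sum_(k < nv) w k * v k = 0 ->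
  0 < eps -> 0 < sigs -> 0 <= siga ->
  vavg w bg = 0 ->
  Dt *m rho + Dx *m vavg w (fun k => v k *: g k)
    = - (siga *: rho) - Hi *m tB *m (tB^T *m rho - brho) ->
  (forall k, Dt *m g k + (v k / eps) *: (Dx *m g k)
       - eps^-1 *: vavg w (fun j => v j *: (Dx *m g j))
       + (v k / eps ^+ 2) *: (Dx *m rho)
     = - ((sigs / eps ^+ 2 + siga) *: g k)
       - Hi *m tB *m (tB^T *m g k - bg k)) ->
  vavg w g = 0 /\
  2^-1 * dot rho (tT *m K1 *m tT^T *m rho)
    + eps ^+ 2 / 2 * savg w (fun k => dot (g k) (tT *m K1 *m tT^T *m g k))
  <= 2^-1 * dot brho (K1 *m brho)
    + eps ^+ 2 / 2 * savg w (fun k => dot (bg k) (K1 *m bg k)).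
Proof.
move=> hPDt hA hPDx hS hPH hK1 hK1pos hPpos hPdef hw hw1 hwv heps hsigs hsiga hbg Erho Eg.
set c := sigs / eps ^+ 2 + siga.
set V := vavg w (fun j => v j *: (Dx *m g j)).
set G := vavg w (fun j => v j *: g j).
have hV : P *m V = S *m G.
  rewrite /V /G /vavg !mulmx_sumr; apply: eq_bigr => j _.
  by rewrite -!scalemxAr mulmxA hPDx.
have key y k := congr1 (fun z => dot y (P *m z)) (Eg k).
have key2 (y : 'cV[R]_N) (k : 'I_nv) :
  dot y (A *m g k) + v k / eps * dot y (S *m g k) - eps^-1 * dot y (S *m G) +
  v k / eps ^+ 2 * dot y (S *m rho) =
  - ((sigs / eps ^+ 2 + siga) * dot y (P *m g k)) -
  (dot y (tB *m K1 *m tB^T *m g k) - dot y (tB *m K1 *m bg k)).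
  move: (key y k) => /=; rewrite -/V.
  by rewrite !(mulmxDr, mulmxN, mulmxBr) -!scalemxAr !mulmxA hPDt hPDx hPH hV !(dotDr, dotNr, dotZr).
have keyr : dot rho (A *m rho) + dot rho (S *m G) =
  - (siga * dot rho (P *m rho)) -
  (dot rho (tB *m K1 *m tB^T *m rho) - dot rho (tB *m K1 *m brho)).
  move: (congr1 (fun z => dot rho (P *m z)) Erho) => /=; rewrite -/G.
  by rewrite !(mulmxDr, mulmxN, mulmxBr) -!scalemxAr !mulmxA hPDt hPDx hPH !(dotDr, dotNr, dotZr).
have hAq x : dot x (A *m x) = 2^-1 * (dot x (tT *m K1 *m tT^T *m x) - dot x (tB *m K1 *m tB^T *m x)).
  have : dot x ((A + A^T) *m x) = 2 * dot x (A *m x).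
    by rewrite mulmxDl dotDr [dot x (A^T *m x)]dotMr trmxK dotC; ring.
  by rewrite hA mulmxBl dotBr => ->; rewrite mulrA mulVf ?mul1r // pnatr_eq0.
have hquad (T : 'M[R]_(N, M)) (u : 'cV[R]_N) : dot u (T *m K1 *m T^T *m u) = dot (T^T *m u) (K1 *m (T^T *m u)).
  by rewrite -!mulmxA dotMr'.
have hcross a b : dot a (K1 *m b) = dot b (K1 *m a).
  by rewrite dotMr hK1 dotC.
have hc : 0 < c.
  rewrite /c; apply: ltr_wpDr => //; apply: divr_gt0 => //; exact: exprn_gt0.
have epsn0 : eps != 0 by apply: lt0r_neq0.
have hSG y : \sum_k w k * (v k * dot y (S *m g k)) = dot y (S *m G).
  rewrite /G dot_vavg_r; apply: eq_bigr => k _.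
  by rewrite -scalemxAr dotZr.
set q := vavg w g.
have hq : q = 0.
  apply: hPdef.
  have E1 : \sum_k w k * (dot q (A *m g k) + eps^-1 * (v k * dot q (S *m g k))
      - eps^-1 * dot q (S *m G) + (eps ^+ 2)^-1 * dot q (S *m rho) * v k
      + c * dot q (P *m g k) + dot q (tB *m K1 *m tB^T *m g k)
      - dot q (tB *m K1 *m bg k)) = 0.
    apply: big1 => k _; move: (key2 q k); rewrite -/c => /eqP; rewrite -subr_eq0 => /eqP Hk.
    rewrite -[RHS](mulr0 (w k)) -Hk; congr (_ * _); ring.
  have E2 : \sum_k w k * (dot q (A *m g k) + eps^-1 * (v k * dot q (S *m g k))
      - eps^-1 * dot q (S *m G) + (eps ^+ 2)^-1 * dot q (S *m rho) * v k
      + c * dot q (P *m g k) + dot q (tB *m K1 *m tB^T *m g k)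
      - dot q (tB *m K1 *m bg k)) =
      \sum_k w k * dot q (A *m g k) + eps^-1 * \sum_k w k * (v k * dot q (S *m g k))
      - (eps^-1 * dot q (S *m G)) * \sum_k w k
      + ((eps ^+ 2)^-1 * dot q (S *m rho)) * \sum_k w k * v k
      + c * \sum_k w k * dot q (P *m g k) + \sum_k w k * dot q (tB *m K1 *m tB^T *m g k)
      - \sum_k w k * dot q (tB *m K1 *m bg k).
    rewrite !mulr_sumr -!sumrN -!big_split /=; apply: eq_bigr => i _; ring.
  have dq0 : dot q 0 = 0 by rewrite dotC dot0l.
  rewrite E2 hSG hw1 hwv -!dot_vavg_r hbg mulmx0 dq0 in E1.
  move: E1; rewrite hAq !hquad.
  have h1 := hK1pos (tT^T *m q); have h2 := hK1pos (tB^T *m q); have h3 := hPpos q.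
  set a1 := dot (tT^T *m q) _ in h1 *; set a2 := dot (tB^T *m q) _ in h2 *.
  set a3 := dot q (P *m q) in h3 *.
  move=> E.
  have h4 : c * a3 = 0.
    apply/le_anti/andP; split; last by apply: mulr_ge0 => //; exact: ltW.
    set z := c * a3 in E *; set z2 := eps^-1 * _ in E; lra.
  by move/eqP: h4; rewrite mulf_eq0 (gt_eqF hc) /= => /eqP.
split => //.
have ineq k : eps ^+ 2 / 2 * dot (g k) (tT *m K1 *m tT^T *m g k) <=
    eps ^+ 2 / 2 * dot (bg k) (K1 *m bg k) + eps * dot (g k) (S *m G)
    - v k * dot (g k) (S *m rho).
  move: (key2 (g k) k); rewrite hAq (dot_skew _ _ _ _ hS) !hquad.
  rewrite -[tB *m K1 *m bg k]mulmxA [dot (g k) (tB *m _)]dotMr'.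
  have hP := hPpos (g k).
  have hD := hK1pos (tB^T *m g k - bg k).
  rewrite mulmxBr !(dotBr, dotBl) [dot (bg k) (K1 *m (tB^T *m g k))]hcross in hD.
  move: hP hD.
  set T := dot (tT^T *m g k) _; set aa := dot (tB^T *m g k) (K1 *m (tB^T *m g k)).
  set ab := dot (tB^T *m g k) (K1 *m bg k); set bb := dot (bg k) _.
  set X := dot (g k) (S *m G); set Y := dot (g k) (S *m rho); set Pk := dot (g k) (P *m g k).
  move=> hP hD /eqP; rewrite -subr_eq0 => /eqP Hk.
  rewrite -subr_ge0.
  have -> : eps ^+ 2 / 2 * bb + eps * X - v k * Y - eps ^+ 2 / 2 * T =
    eps ^+ 2 * (c * Pk + 2^-1 * (aa - ab - (ab - bb))) - eps ^+ 2 *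
    (2^-1 * (T - aa) + v k / eps * 0 - eps^-1 * X + v k / eps ^+ 2 * Y -
     (- ((sigs / eps ^+ 2 + siga) * Pk) - (aa - ab))).
    rewrite /c; field; exact: epsn0.
  rewrite Hk mulr0 subr0; apply: mulr_ge0; first exact: sqr_ge0.
  apply: addr_ge0; first by apply: mulr_ge0 => //; exact: ltW.
  apply: mulr_ge0 => //; by rewrite invr_ge0 ler0n.
have ineqr : 2^-1 * dot rho (tT *m K1 *m tT^T *m rho) <=
    2^-1 * dot brho (K1 *m brho) - dot rho (S *m G).
  move: keyr; rewrite hAq !hquad.
  rewrite -[tB *m K1 *m brho]mulmxA [dot rho (tB *m _)]dotMr'.
  have hP := hPpos rho.
  have hD := hK1pos (tB^T *m rho - brho).
  rewrite mulmxBr !(dotBr, dotBl) [dot brho (K1 *m (tB^T *m rho))]hcross in hD.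
  move: hP hD.
  set T := dot (tT^T *m rho) _; set aa := dot (tB^T *m rho) (K1 *m (tB^T *m rho)).
  set ab := dot (tB^T *m rho) (K1 *m brho); set bb := dot brho _.
  set X := dot rho (S *m G); set Pk := dot rho (P *m rho).
  move=> hP hD Hk.
  have hsP : 0 <= siga * Pk by apply: mulr_ge0.
  set z := siga * Pk in Hk hsP.
  lra.
have sX : \sum_k w k * dot (g k) (S *m G) = 0.
  by rewrite -(dot_vavg_l _ _ _ w (S *m G) g) -/q hq dot0l.
have sY : \sum_k w k * (v k * dot (g k) (S *m rho)) = dot G (S *m rho).
  rewrite /G dot_vavg_l; apply: eq_bigr => k _; by rewrite dotZl.
have sumineq : \sum_k w k * (eps ^+ 2 / 2 * dot (g k) (tT *m K1 *m tT^T *m g k)) <=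
   \sum_k w k * (eps ^+ 2 / 2 * dot (bg k) (K1 *m bg k) + eps * dot (g k) (S *m G)
    - v k * dot (g k) (S *m rho)).
  apply: ler_sum => k _; apply: ler_wpM2l; [exact: ltW | exact: ineq].
have sumR : \sum_k w k * (eps ^+ 2 / 2 * dot (bg k) (K1 *m bg k) + eps * dot (g k) (S *m G)
    - v k * dot (g k) (S *m rho)) =
   eps ^+ 2 / 2 * savg w (fun k => dot (bg k) (K1 *m bg k))
   + eps * \sum_k w k * dot (g k) (S *m G)
   - \sum_k w k * (v k * dot (g k) (S *m rho)).
  rewrite /savg !mulr_sumr -sumrN -!big_split; apply: eq_bigr => k _ /=; ring.
have sumL : \sum_k w k * (eps ^+ 2 / 2 * dot (g k) (tT *m K1 *m tT^T *m g k)) =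
   eps ^+ 2 / 2 * savg w (fun k => dot (g k) (tT *m K1 *m tT^T *m g k)).
  rewrite /savg !mulr_sumr; apply: eq_bigr => k _ /=; ring.
rewrite sumR sumL sX sY mulr0 addr0 in sumineq.
rewrite (dot_skew2 _ _ _ _ _ hS) in ineqr.
lra.
Qed.


Section Tens.
Variable R : realFieldType.

Lemma tens11 m n : tensmx (1%:M : 'M[R]_m) (1%:M : 'M[R]_n) = 1%:M.
Proof.
apply/matrixP => i j.
case: (mxtens_indexP i) => i0 i1; case: (mxtens_indexP j) => j0 j1.
rewrite tensmxE !mxE (inj_eq (can_inj (@mxtens_indexK m n))) xpair_eqE.
by case: (i0 == j0); case: (i1 == j1); rewrite ?mulr1 ?mul1r ?mulr0 ?mul0r.
Qed.

Lemma tensmxDl m n p q (A B : 'M[R]_(m,n)) (C : 'M[R]_(p,q)) :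
  tensmx (A + B) C = tensmx A C + tensmx B C.
Proof. by apply/matrixP => i j; rewrite !mxE mulrDl. Qed.
Lemma tensmxNl m n p q (A : 'M[R]_(m,n)) (C : 'M[R]_(p,q)) :
  tensmx (- A) C = - tensmx A C.
Proof. by apply/matrixP => i j; rewrite !mxE mulNr. Qed.
Lemma tensmxBl m n p q (A B : 'M[R]_(m,n)) (C : 'M[R]_(p,q)) :
  tensmx (A - B) C = tensmx A C - tensmx B C.
Proof. by rewrite tensmxDl tensmxNl. Qed.
Lemma tensmxNr m n p q (A : 'M[R]_(m,n)) (C : 'M[R]_(p,q)) :
  tensmx A (- C) = - tensmx A C.
Proof. by apply/matrixP => i j; rewrite !mxE mulrN. Qed.

Lemma posdiag1 n : posdiag (1%:M : 'M[R]_n).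
Proof.
split => [i j h|i]; rewrite mxE ?(negbTE h) ?eqxx //.
Qed.

Lemma posdiag_tens m n (A : 'M[R]_m) (B : 'M[R]_n) :
  posdiag A -> posdiag B -> posdiag (tensmx A B).
Proof.
case=> a1 a2 [b1 b2]; split.
  move=> i j; case: (mxtens_indexP i) => i0 i1; case: (mxtens_indexP j) => j0 j1.
  rewrite tensmxE (inj_eq (can_inj (@mxtens_indexK m n))) xpair_eqE negb_and.
  by case/orP => h; [rewrite a1 ?mul0r | rewrite b1 ?mulr0].
move=> i; case: (mxtens_indexP i) => i0 i1; rewrite tensmxE; exact: mulr_gt0.
Qed.

Lemma is_SBP_posdiag n p (x : 'cV[R]_n.+1) H Q : is_SBP p x H Q -> posdiag H.
Proof.
case=> _ [hd [_ [hp _]]]; split => // i j h; move/is_diag_mxP: hd; apply.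
by [].
Qed.

Lemma Ebar_tr n : (@Ebar R n)^T = @Ebar R n.
Proof.
by rewrite /Ebar linearB /= !trmx_mul !trmxK.
Qed.

Lemma QGx_skew nx (Qx : 'M[R]_nx.+1) : Qx + Qx^T = Ebar R -> (QGx Qx)^T = - QGx Qx.
Proof.
move=> hQ.
have hS : (Qx - 2^-1 *: Ebar R)^T = - (Qx - 2^-1 *: Ebar R).
  apply/matrixP => i j.
  have := congr1 (fun M : 'M[R]_nx.+1 => M i j) hQ; have := congr1 (fun M : 'M[R]_nx.+1 => M i j) (Ebar_tr nx).
  move=> e1 e2; rewrite !mxE in e1 e2 *; lra.
rewrite /QGx.
have hX : (2^-1 *: (@tR R nx *m (@tL R nx)^T))^T = 2^-1 *: (@tL R nx *m (@tR R nx)^T).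
  by rewrite linearZ /= trmx_mul trmxK.
have hY : (2^-1 *: (@tL R nx *m (@tR R nx)^T))^T = 2^-1 *: (@tR R nx *m (@tL R nx)^T).
  by rewrite linearZ /= trmx_mul trmxK.
move: hS hX hY.
set Sx := (Qx - _); set X := 2^-1 *: (tR R *m _); set Y := 2^-1 *: (tL R *m _).
move=> hS hX hY.
rewrite !linearD /= !linearN /= !trmx_tens hS hX hY trmx1 trmxK tensmxNr.
set a := tensmx _ Sx; set b := tensmx (Pcyc R) X; set c := tensmx (Pcyc R)^T Y.
by rewrite opprK addrAC.
Qed.

End Tens.


Theorem theorem3p11 (R : realFieldType) (nx nt nv px pt : nat)
  (xn : 'cV[R]_nx.+1) (Hx Qx : 'M[R]_nx.+1)
  (tn : 'cV[R]_nt.+1) (Ht Qt : 'M[R]_nt.+1)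
  (v w : 'I_nv -> R) (eps sigs siga : R)
  (rho0 : 'cV[R]_(nt.+1 * (3 * nx.+1))) (g0 : 'I_nv -> 'cV[R]_(nt.+1 * (3 * nx.+1)))
  (rhoI rhoII : 'cV[R]_(nt.+1 * (3 * nx.+1)))
  (gI gII : 'I_nv -> 'cV[R]_(nt.+1 * (3 * nx.+1))) :
  is_SBP px xn Hx Qx ->
  is_SBP pt tn Ht Qt ->
  (forall k, 0 < w k) ->
  \sum_(k < nv) w k = 1 ->
  \sum_(k < nv) w k * v k = 0 ->
  0 < eps -> 0 < sigs -> 0 <= siga ->
  vavg w g0 = 0 ->
  let Dx := @Dx_glob R nt nx Hx Qx in
  let Dt := @Dt_glob R nt nx Ht Qt in
  let Htinv := invmx (@Ht_glob R nt nx Ht) in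
  let tB := @tB_glob R nt nx in
  let tT := @tT_glob R nt nx in
  (* slab I *)
  Dt *m rhoI + Dx *m vavg w (fun k => v k *: gI k)
    = - (siga *: rhoI) - Htinv *m tB *m (tB^T *m (rhoI - rho0)) ->
  (forall k, Dt *m gI k + (v k / eps) *: (Dx *m gI k)
       - eps^-1 *: vavg w (fun j => v j *: (Dx *m gI j))
       + (v k / eps ^+ 2) *: (Dx *m rhoI)
     = - ((sigs / eps ^+ 2 + siga) *: gI k)
       - Htinv *m tB *m (tB^T *m (gI k - g0 k))) ->
  (* slab II *)
  Dt *m rhoII + Dx *m vavg w (fun k => v k *: gII k)
    = - (siga *: rhoII) - Htinv *m tB *m (tB^T *m rhoII - tT^T *m rhoI) ->
  (forall k, Dt *m gII k + (v k / eps) *: (Dx *m gII k)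
       - eps^-1 *: vavg w (fun j => v j *: (Dx *m gII j))
       + (v k / eps ^+ 2) *: (Dx *m rhoII)
     = - ((sigs / eps ^+ 2 + siga) *: gII k)
       - Htinv *m tB *m (tB^T *m gII k - tT^T *m gI k)) ->
  2^-1 * qform (@MT R nt nx Hx) rhoII
    + eps ^+ 2 / 2 * savg w (fun k => qform (@MT R nt nx Hx) (gII k))
  <= 2^-1 * qform (@MB R nt nx Hx) rho0
    + eps ^+ 2 / 2 * savg w (fun k => qform (@MB R nt nx Hx) (g0 k)).
Proof.
move=> hSx hSt hw hw1 hwv heps hsigs hsiga hg0 Dx Dt Htinv tB tT EI1 EI2 EII1 EII2.
have pHx := @is_SBP_posdiag _ _ _ _ _ _ hSx.
have pHt := @is_SBP_posdiag _ _ _ _ _ _ hSt.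
have uHx := posdiag_unit _ _ _ pHx.
have uHt := posdiag_unit _ _ _ pHt.
case: hSx => _ [_ [_ [_ [hQx _]]]].
case: hSt => _ [_ [_ [_ [hQt _]]]].
set K := tensmx (1%:M : 'M[R]_3) Hx.
have pK : posdiag K := posdiag_tens _ _ _ _ _ (posdiag1 _ 3) pHx.
set P := tensmx Ht K.
have pP : posdiag P := posdiag_tens _ _ _ _ _ pHt pK.
set K1 := tensmx (1%:M : 'M[R]_1) K.
have pK1 : posdiag K1 := posdiag_tens _ _ _ _ _ (posdiag1 _ 1) pK.
have uHtg : @Ht_glob R nt nx Ht \in unitmx.
  apply: tensmx_unit => //; rewrite ?muln_eq0 ?unitmx1 //.
have hq (t : 'cV[R]_nt.+1) : tensmx t (1%:M : 'M[R]_(3 * nx.+1)) *m K1 *m (tensmx t (1%:M : 'M[R]_(3 * nx.+1)))^T = tensmx (t *m t^T) K.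
  by rewrite trmx_tens trmx1 !tensmx_mul mulmx1 mul1mx mulmx1.
have hPDt : P *m Dt = tensmx Qt K.
  by rewrite /Dt /Dt_glob /P tensmx_mul mulmxA mulmxV // mul1mx mulmx1.
have hA : tensmx Qt K + (tensmx Qt K)^T = tT *m K1 *m tT^T - tB *m K1 *m tB^T.
  rewrite trmx_tens (posdiag_tr _ _ _ pK) -tensmxDl hQt /Ebar tensmxBl.
  by rewrite /tT /tB /tT_glob /tB_glob !hq.
have hPDx : P *m Dx = tensmx Ht (QGx Qx).
  rewrite /Dx /Dx_glob /P tensmx_mul mulmx1 /DGx mulmxA /K tensmx_mul mul1mx mulmxV // tens11.
  by rewrite mul1mx.
have hS : (tensmx Ht (QGx Qx))^T = - tensmx Ht (QGx Qx).
  by rewrite trmx_tens (posdiag_tr _ _ _ pHt) (QGx_skew _ _ _ hQx) tensmxNr.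
have hPH : P *m Htinv *m tB = tB *m K1.
  have hP' : P = tensmx (1%:M : 'M[R]_nt.+1) K *m @Ht_glob R nt nx Ht.
    by rewrite /Ht_glob tensmx_mul mul1mx mulmx1.
  rewrite /Htinv hP' -(mulmxA (tensmx _ K)) mulmxV // mulmx1.
  by rewrite /tB /tB_glob !tensmx_mul !mul1mx !mulmx1.
have hK1s := posdiag_tr _ _ _ pK1.
have hbgI : vavg w (fun k => tB^T *m g0 k) = 0 by rewrite vavg_mul hg0 mulmx0.
have EI1' : Dt *m rhoI + Dx *m vavg w (fun k => v k *: gI k)
    = - (siga *: rhoI) - Htinv *m tB *m (tB^T *m rhoI - tB^T *m rho0).
  by rewrite -mulmxBr.
have EI2' k : Dt *m gI k + (v k / eps) *: (Dx *m gI k)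
       - eps^-1 *: vavg w (fun j => v j *: (Dx *m gI j))
       + (v k / eps ^+ 2) *: (Dx *m rhoI)
     = - ((sigs / eps ^+ 2 + siga) *: gI k)
       - Htinv *m tB *m (tB^T *m gI k - tB^T *m g0 k).
  by rewrite -mulmxBr; exact: EI2.
have [hqI ineqI] := @slab R _ _ nv P (tensmx Qt K) (tensmx Ht (QGx Qx)) Dt Dx Htinv tB tT K1
  v w eps sigs siga rhoI (tB^T *m rho0) gI (fun k => tB^T *m g0 k) hPDt hA hPDx hS hPH hK1s
  (fun u => posdiag_ge0 _ _ _ u pK1) (fun x => posdiag_ge0 _ _ _ x pP)
  (fun x => posdiag_def _ _ _ x pP) hw hw1 hwv heps hsigs hsiga hbgI EI1' EI2'.
have hbgII : vavg w (fun k => tT^T *m gI k) = 0 by rewrite vavg_mul hqI mulmx0.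
have [_ ineqII] := @slab R _ _ nv P (tensmx Qt K) (tensmx Ht (QGx Qx)) Dt Dx Htinv tB tT K1
  v w eps sigs siga rhoII (tT^T *m rhoI) gII (fun k => tT^T *m gI k) hPDt hA hPDx hS hPH hK1s
  (fun u => posdiag_ge0 _ _ _ u pK1) (fun x => posdiag_ge0 _ _ _ x pP)
  (fun x => posdiag_def _ _ _ x pP) hw hw1 hwv heps hsigs hsiga hbgII EII1 EII2.
have hMT : @MT R nt nx Hx = tT *m K1 *m tT^T by rewrite /tT /tT_glob hq.
have hMB : @MB R nt nx Hx = tB *m K1 *m tB^T by rewrite /tB /tB_glob hq.
have e1 : qform (@MT R nt nx Hx) rhoII = dot rhoII (tT *m K1 *m tT^T *m rhoII).
  by rewrite qformE hMT.
have e2 : savg w (fun k => qform (@MT R nt nx Hx) (gII k))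
    = savg w (fun k => dot (gII k) (tT *m K1 *m tT^T *m gII k)).
  by apply: eq_savg => k; rewrite qformE hMT.
have e3 : qform (@MB R nt nx Hx) rho0 = dot (tB^T *m rho0) (K1 *m (tB^T *m rho0)).
  by rewrite qformE hMB quadE.
have e4 : savg w (fun k => qform (@MB R nt nx Hx) (g0 k))
    = savg w (fun k => dot (tB^T *m g0 k) (K1 *m (tB^T *m g0 k))).
  by apply: eq_savg => k; rewrite qformE hMB quadE.
have e5 : dot (tT^T *m rhoI) (K1 *m (tT^T *m rhoI)) = dot rhoI (tT *m K1 *m tT^T *m rhoI).
  by rewrite quadE.
have e6 : savg w (fun k => dot (tT^T *m gI k) (K1 *m (tT^T *m gI k)))
    = savg w (fun k => dot (gI k) (tT *m K1 *m tT^T *m gI k)).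
  by apply: eq_savg => k; rewrite quadE.
rewrite e1 e2 e3 e4; rewrite e5 e6 in ineqII.
exact: le_trans ineqII ineqI.
Qed.
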